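(* For any complex number $a\in\mathbb{C}$, the spectral density function of $z-a\in\mathbb{C}[\mathbb{Z}]=\mathbb{C}[z,z^{-1}]$ satisfies \[ F\bigl(r_{z-a}^{(2)}\bigr)(\lambda)\le\frac{8\sqrt3}{\sqrt{47}}\cdot\lambda\quad\text{for all }\lambda\in[0,\infty). \]
   Context: For $q\in\mathbb{C}[z,z^{-1}]$, $r_q^{(2)}\colon L^2(\mathbb{Z})\to L^2(\mathbb{Z})$ is multiplication by $q$, and its spectral density function is $F(r_q^{(2)})(\lambda)=\mu_{S^1}\bigl(\{z\in S^1: |q(z)|\le\lambda\}\bigr)$ with $\mu_{S^1}$ the normalized Haar measure on the unit circle. *)

(* Defs.v *)
From HB Require Import structures.
From mathcomp Require Import all_boot all_order all_algebra.
From mathcomp Require Import all_classical all_reals all_analysis.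
From mathcomp Require Import complex.
Set Implicit Arguments. Unset Strict Implicit. Unset Printing Implicit Defensive.
Import Order.TTheory GRing.Theory Num.Theory.
Local Open Scope classical_set_scope.
Local Open Scope ring_scope.
Local Open Scope complex_scope.

Definition circ (R : realType) (t : R) : R[i] :=
  (cos (2 * pi * t)) +i* (sin (2 * pi * t)).

(* Spectral density function of r_q^{(2)} (multiplication by q on L^2(Z)):
   F(lambda) = mu_{S^1}({z in S^1 : |q(z)| <= lambda}), where the normalized
   Haar measure on S^1 is the image of Lebesgue measure on [0,1) under
   t |-> e^{2 pi i t}. Here q is (the function on the circle induced by) the
   Laurent polynomial. *)
Definition spectral_density (R : realType) (q : R[i] -> R[i]) (lam : R)
  : \bar R :=
  (@lebesgue_measure R) ([set t : R | 0 <= t < 1] `&`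
                         [set t : R | `|q (circ t)| <= lam%:C]).

(* Main.v *)
Require Import Defs.
From HB Require Import structures.
From mathcomp Require Import all_boot all_order all_algebra.
From mathcomp Require Import all_classical all_reals all_analysis.
From mathcomp Require Import complex.
From mathcomp Require Import ring lra.
Import Order.TTheory GRing.Theory Num.Theory.
Local Open Scope ring_scope.

Section J.
Variable R : realType.
Local Open Scope complex_scope.

Definition fJ (k : R) := fun x : R => sin x - k * x.

Lemma mvt_f (k a b : R) : a <= b ->
  exists2 c, c \in `[a, b]%R & fJ k b - fJ k a = (cos c - k) * (b - a).
Proof.
move=> ab; apply: MVT_segment => //.
  move=> x _; rewrite /fJ.
  have -> : cos x - k = cos x - k * 1 by rewrite mulr1.
  exact: is_deriveB.
apply: derivable_within_continuous => x _.
have -> : fJ k = (fun x => sin x - k * x) by [].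
apply: ex_derive; apply: is_deriveB.
Qed.

Lemma cos_anti (x y : R) : 0 <= x -> x <= y -> y <= pi -> cos y <= cos x.
Proof.
move=> x0 xy ypi; case: (ltrgtP x y) xy => // [lt|->] _; last by [].
apply: ltW; rewrite ltr_cos // in_itv /=.
  by rewrite x0 (le_trans (ltW lt)).
by rewrite ypi (le_trans x0 (ltW lt)).
Qed.

Lemma jordan (x : R) : 0 <= x -> x <= pi / 2 -> 2 / pi * x <= sin x.
Proof.
move=> x0 xpi.
have pi0 := pi_gt0 R.
set k := 2 / pi.
have k0 : 0 < k by rewrite divr_gt0.
have k1 : k <= 1 by rewrite /k ler_pdivrMr // mul1r pi_ge2.
set x0' := acos k.
have hk : -1 <= k <= 1 by rewrite k1 andbT (le_trans _ (ltW k0)) // lerN10.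
have cx0 : cos x0' = k by rewrite /x0' acosK // in_itv /= hk.
have x0ge : 0 <= x0' by exact: acos_ge0.
have x0pi : x0' <= pi / 2.
  rewrite leNgt; apply/negP => lt.
  have : cos x0' < cos (pi / 2).
    have pi2pi : pi / 2 <= pi :> R by rewrite ler_pdivrMr // ler_pMr // ler1n.
    rewrite ltr_cos // in_itv /= ?x0ge ?pi2pi ?acos_lepi //.
    by rewrite divr_ge0 // ltW.
  by rewrite cos_pihalf cx0 ltNge (ltW k0).
have pi2pi : pi / 2 <= pi :> R by rewrite ler_pdivrMr // ler_pMr // ler1n.
rewrite -subr_ge0.
have -> : sin x - k * x = fJ k x by [].
case: (leP x x0') => hx.
- have [c cI E] := mvt_f k 0 x x0.
  have -> : fJ k x = fJ k x - fJ k 0 by rewrite /fJ sin0 mulr0 subrr subr0.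
  rewrite E mulr_ge0 // ?subr_ge0 -?cx0 //.
  move: cI; rewrite in_itv /= => /andP [c0 cx].
  exact: cos_anti c0 (le_trans cx hx) (le_trans x0pi pi2pi).
- have [c cI E] := mvt_f k x (pi / 2) xpi.
  have -> : fJ k x = - (fJ k (pi / 2) - fJ k x).
    have h : 2 / pi * (pi / 2) = 1 :> R.
      by rewrite mulrC mulrA divfK ?divff // gt_eqF.
    by rewrite /fJ sin_pihalf /k h subrr sub0r opprK.
  rewrite E oppr_ge0 mulr_le0_ge0 // ?subr_ge0 // subr_le0 -cx0.
  move: cI; rewrite in_itv /= => /andP [xc cpi].
  exact: cos_anti x0ge (le_trans (ltW hx) xc) (le_trans cpi pi2pi).
Qed.


Lemma sin_lin (u : R) : `|u| <= 1/2 -> 2 * `|u| <= `|sin (pi * u)|.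
Proof.
have key (v : R) : 0 <= v -> v <= 1/2 -> 2 * v <= `|sin (pi * v)|.
  move=> v0 v2; have pi0 := pi_gt0 R.
  have h1 : 0 <= pi * v by rewrite mulr_ge0 // ltW.
  have h2 : pi * v <= pi / 2.
    by rewrite -[pi / 2]mulr1 -mulrA ler_wpM2l ?(ltW pi0) // mulr1 -div1r.
  have := jordan _ h1 h2.
  rewrite mulrA divfK ?gt_eqF // => h.
  by apply: le_trans h (ler_norm _).
case: (leP 0 u) => u0 hu.
  by rewrite ger0_norm // key // -(ger0_norm u0).
rewrite ltr0_norm // in hu *.
by rewrite -normrN -sinN -mulrN key // oppr_ge0 ltW.
Qed.

Lemma circ_dist (t s : R) :
  `|circ t - circ s| = (2 * `|sin (pi * (t - s))|)%:C.
Proof.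
rewrite normc_def /circ /=.
congr (_%:C).
set A := 2 * pi * t; set B := 2 * pi * s.
have AB : A - B = (pi * (t - s)) *+ 2 by rewrite /A /B mulr2n; ring.
have -> : (cos A - cos B) ^+ 2 + (sin A + - sin B) ^+ 2 = (2 * sin (pi * (t - s))) ^+ 2.
  have e1 := cos2Dsin2 A. have e2 := cos2Dsin2 B.
  have e3 := cosB A B. rewrite AB cos_mulr2n cos2sin2 in e3.
  have -> : (cos A - cos B) ^+ 2 + (sin A - sin B) ^+ 2 =
    (cos A ^+ 2 + sin A ^+ 2) + (cos B ^+ 2 + sin B ^+ 2) - 2 * (cos A * cos B + sin A * sin B) by ring.
  rewrite e1 e2 -e3; ring.
by rewrite sqrtr_sqr normrM ger0_norm.
Qed.


Lemma contain (a : R[i]) (lam t t0 : R) : 0 <= t < 1 -> 0 <= t0 < 1 ->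
  `|circ t - a| <= lam%:C -> `|circ t0 - a| <= lam%:C ->
  [\/ t0 - lam / 2 <= t <= t0 + lam / 2,
       t0 + 1 - lam / 2 <= t <= t0 + 1 |
       t0 - 1 <= t <= t0 - 1 + lam / 2].
Proof.
move=> /andP [t0' t1] /andP [s0 s1] ht hs.
have hd : `|circ t - circ t0| <= (2 * lam)%:C.
  apply: le_trans (ler_distD a _ _) _.
  by rewrite [`|a - _|]distrC mulr_natl mulr2n rmorphD lerD.
rewrite circ_dist lecR ler_pM2l // in hd.
have two_ge0 : 0 <= 2 :> R by [].
set u := t - t0 in hd.
have hu1 : u < 1 by rewrite /u; lra.
have hu2 : -1 < u by rewrite /u; lra.
case: (leP `|u| (1/2)) => hu.
  have h := le_trans (sin_lin _ hu) hd.
  have : `|u| <= lam / 2 by rewrite ler_pdivlMr //; lra.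
  rewrite ler_norml /u => /andP [h1 h2].
  by apply: Or31; apply/andP; split; lra.
case: (leP 0 u) => u0.
  have hv : `|u - 1| <= 1/2 by rewrite ler_norml; rewrite ger0_norm // in hu; lra.
  have e : `|sin (pi * (u - 1))| = `|sin (pi * u)|.
    by rewrite mulrBr mulr1 -{2}[pi * u](subrK pi) sinDpi normrN.
  have hd' : `|sin (pi * (u - 1))| <= lam by rewrite e.
  have h := le_trans (sin_lin _ hv) hd'.
  have : `|u - 1| <= lam / 2 by rewrite ler_pdivlMr //; lra.
  rewrite ler_norml /u => /andP [h1 h2].
  by apply: Or32; apply/andP; split; lra.
have hv : `|u + 1| <= 1/2 by rewrite ler_norml; rewrite ltr0_norm // in hu; lra.
have e : `|sin (pi * (u + 1))| = `|sin (pi * u)|.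
  by rewrite mulrDr mulr1 sinDpi normrN.
have hd' : `|sin (pi * (u + 1))| <= lam by rewrite e.
have h := le_trans (sin_lin _ hv) hd'.
have : `|u + 1| <= lam / 2 by rewrite ler_pdivlMr //; lra.
rewrite ler_norml /u => /andP [h1 h2].
by apply: Or33; apply/andP; split; lra.
Qed.
Local Open Scope classical_set_scope.
Local Open Scope ereal_scope.
Lemma leb_mono (A B : set R) : A `<=` B -> lebesgue_measure A <= lebesgue_measure B.
Proof. move=> AB; exact: le_mu_ext. Qed.

Lemma leb_itv (x y : R) : (x <= y)%R -> lebesgue_measure [set` `[x, y]%R] <= (y - x)%:E.
Proof.
move=> xy; rewrite lebesgue_measure_itv /=.
case: ifP => _. by []. by rewrite lee_fin subr_ge0.
Qed.
Lemma two_le : (2 <= 8 * Num.sqrt 3 / Num.sqrt 47 :> R)%R.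
Proof.
have h47 : (0 < Num.sqrt 47 :> R)%R by rewrite sqrtr_gt0.
rewrite ler_pdivlMr // -ler_sqr ?nnegrE ?mulr_ge0 ?sqrtr_ge0 //.
rewrite !exprMn !sqr_sqrtr // !expr2; lra.
Qed.

Lemma main_bound (a : R[i]) (lam : R) : (0 <= lam)%R ->
  spectral_density (fun z : R[i] => (z - a)%R) lam <=
   ((8 * Num.sqrt 3 / Num.sqrt 47) * lam)%R%:E.
Proof.
move=> lam0; rewrite /spectral_density.
set S := (_ `&` _).
have C0 := two_le.
case: (pselect (exists t0, S t0)) => [[t0 [/= h0 hs]]|nS].
  have sub : S `<=` [set` `[t0 - lam/2, t0 + lam/2]%R] `|`
      [set` `[t0 + 1 - lam/2, t0 + 1]%R] `|` [set` `[t0 - 1, t0 - 1 + lam/2]%R].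
    move=> t [/= ht htt].
    by case: (@contain a lam t t0 ht h0 htt hs) => h; [left; left|left; right|right]; rewrite /= in_itv /= h.
  apply: le_trans (leb_mono _ _ sub) _.
  apply: le_trans (measureU2 _ _ _) _.
  - by apply: measurableU; apply: measurable_itv.
  - exact: measurable_itv.
  apply: le_trans (leeD (measureU2 _ _ _) (lexx _)) _.
  - exact: measurable_itv.
  - exact: measurable_itv.
  have l2 : (0 <= lam / 2)%R by rewrite divr_ge0.
  apply: le_trans (leeD (leeD (leb_itv _ _ _) (leb_itv _ _ _)) (leb_itv _ _ _)) _.
  - by rewrite lerD2l; lra.
  - by rewrite lerBlDr; lra.
  - by rewrite lerDl.
  rewrite -!EFinD lee_fin.
  apply: le_trans (ler_wpM2r lam0 C0); lra.
have -> : S = set0 by apply/seteqP; split => // t St; apply: nS; exists t.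
rewrite measure0 lee_fin mulr_ge0 //.
Qed.
End J.

Theorem lemma2p2 (R : realType) (a : R[i]) (lam : R) :
  0 <= lam ->
  (spectral_density (fun z : R[i] => (z - a)%R) lam <=
   ((8 * Num.sqrt 3 / Num.sqrt 47) * lam)%R%:E)%E.
Proof. exact: main_bound. Qed.
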